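(* Let $k\ge1$, $G=(V,E)$ an inductively $k$-independent graph with $k$-independence ordering $v_1,\dots,v_n$, $f:2^V\to\mathbb{R}_{\ge0}$ monotone submodular with $f(\emptyset)=0$, and $\beta>0$. Run algorithm PD-MON (described in the context) and let $\mu=f(S_{\mathrm{end}})$, $y_i=(1+\beta)w_i$ for all $i$, and $z_i=0$ if $v_i\in S_{\mathrm{end}}$ and $z_i=f_{S_i}(v_i)$ otherwise, where $S_i$ is the stack just before $v_i$ is processed. Then $(\mu,y,z)$ is a feasible solution of the linear program with constraints \[ \mu+\sum_{v_i\in L} z_i\ge f(L)\ \ \text{for all } L\subseteq V,\qquad y_i+\sum_{v_j\in B_i}y_j\ge z_i\ \text{ and } y_i\ge0\ \ \text{for all } i\in[n], \] where $B_i=N(v_i)\cap\{v_1,\dots,v_{i-1}\}$ ($\mu$ and $z$ are unrestricted in sign).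
   Context: $N(v)$ is the neighbourhood of $v$ (excluding $v$); $G$ is inductively $k$-independent with $k$-independence ordering $v_1,\dots,v_n$ if for every $i$, $G[N(v_i)\cap\{v_i,\dots,v_n\}]$ has no independent set of size more than $k$. For $S\subseteq V$, $f_S(v)=f(S\cup\{v\})-f(S)$. Algorithm PD-MON (parameter $\beta>0$). Phase 1: start with $S=\emptyset$ (a stack) and $w_1=\dots=w_n=0$. For $i=1,\dots,n$: let $C_i=N(v_i)\cap S$ for the current $S$; if $f_S(v_i)>(1+\beta)\sum_{v_j\in C_i}w_j$, set $w_i=f_S(v_i)-\sum_{v_j\in C_i}w_j$ (with $S$ the set before insertion) and push $v_i$ onto $S$; otherwise leave $w_i=0$. Let $S_{\mathrm{end}}$ be $S$ at the end of Phase 1. Phase 2: with $S_{\mathrm{out}}=\emptyset$, pop vertices of $S_{\mathrm{end}}$ in reverse insertion order, adding a popped $v$ to $S_{\mathrm{out}}$ whenever $S_{\mathrm{out}}\cup\{v\}$ is independent. Output $S_{\mathrm{out}}$. *)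

(* Defs.v *)
From mathcomp Require Import all_boot all_order all_algebra.
Set Implicit Arguments. Unset Strict Implicit. Unset Printing Implicit Defensive.
Import Order.TTheory GRing.Theory Num.Theory.
Local Open Scope ring_scope.

(* Vertices are 'I_n; the k-independence ordering v_1..v_n is the index order
   0 < 1 < ... < n-1.  The graph is a symmetric irreflexive relation e. *)

Definition simple_graph (n : nat) (e : rel 'I_n) : Prop :=
  (forall x y, e x y = e y x) /\ (forall x, ~~ e x x).

Definition nbhd (n : nat) (e : rel 'I_n) (v : 'I_n) : {set 'I_n} :=
  [set u | e v u].

Definition independent (n : nat) (e : rel 'I_n) (I : {set 'I_n}) : bool :=
  [forall x in I, forall y in I, ~~ e x y].

Definition inductively_k_independent (n : nat) (e : rel 'I_n) (k : nat) : Prop :=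
  forall (i : 'I_n) (I : {set 'I_n}),
    I \subset nbhd e i :&: [set u : 'I_n | i <= u]%N ->
    independent e I -> (#|I| <= k)%N.

Definition monotone_setfun (n : nat) (R : realFieldType) (f : {set 'I_n} -> R) :=
  forall A B : {set 'I_n}, A \subset B -> f A <= f B.

Definition submodular (n : nat) (R : realFieldType) (f : {set 'I_n} -> R) :=
  forall A B : {set 'I_n}, f (A :|: B) + f (A :&: B) <= f A + f B.

Definition marg (n : nat) (R : realFieldType) (f : {set 'I_n} -> R)
  (S : {set 'I_n}) (v : 'I_n) : R := f (S :|: [set v]) - f S.

(* Since insertions happen in index order, the stack S is represented by the set
   of its elements (its insertion order is the index order). *)
Definition pd_step (n : nat) (R : realFieldType) (e : rel 'I_n)
  (f : {set 'I_n} -> R) (beta : R)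
  (st : {set 'I_n} * ('I_n -> R)) (i : 'I_n) : {set 'I_n} * ('I_n -> R) :=
  let S := st.1 in let w := st.2 in
  let sumC := \sum_(j in nbhd e i :&: S) w j in
  let g := marg f S i in
  if g > (1 + beta) * sumC then
    (S :|: [set i], fun j => if j == i then g - sumC else w j)
  else (S, w).

(* State after processing the first m vertices v_1..v_m (indices 0..m-1). *)
Fixpoint pd_state (n : nat) (R : realFieldType) (e : rel 'I_n)
  (f : {set 'I_n} -> R) (beta : R) (m : nat) : {set 'I_n} * ('I_n -> R) :=
  match m with
  | 0 => (set0, fun _ => 0)
  | m'.+1 =>
      let st := pd_state e f beta m' in
      match @insub nat (fun x => (x < n)%N) 'I_n m' with
      | Some i => pd_step e f beta st i
      | None => st
      end
  end.

Definition S_before (n : nat) (R : realFieldType) (e : rel 'I_n)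
  (f : {set 'I_n} -> R) (beta : R) (i : 'I_n) : {set 'I_n} :=
  (pd_state e f beta i).1.

Definition S_end (n : nat) (R : realFieldType) (e : rel 'I_n)
  (f : {set 'I_n} -> R) (beta : R) : {set 'I_n} :=
  (pd_state e f beta n).1.

Definition pd_w (n : nat) (R : realFieldType) (e : rel 'I_n)
  (f : {set 'I_n} -> R) (beta : R) : 'I_n -> R :=
  (pd_state e f beta n).2.

(* Phase 2: pop S_end in reverse insertion (= decreasing index) order, greedily
   keeping an independent set.  (Not needed by lemma2, given for completeness.) *)
Definition pd_out (n : nat) (R : realFieldType) (e : rel 'I_n)
  (f : {set 'I_n} -> R) (beta : R) : {set 'I_n} :=
  foldl (fun (Sout : {set 'I_n}) v =>
           if independent e (v |: Sout) then v |: Sout else Sout)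
        set0 (rev [seq v <- enum 'I_n | v \in S_end e f beta]).

(* Main.v *)
Require Import Defs.
From mathcomp Require Import all_boot all_order all_algebra.
From mathcomp.algebra_tactics Require Import lra.
Import Order.TTheory GRing.Theory Num.Theory.
Local Open Scope ring_scope.

Section Aux.
Variables (R : realFieldType) (n : nat) (e : rel 'I_n)
  (f : {set 'I_n} -> R) (beta : R).
Hypothesis fmono : monotone_setfun f.
Hypothesis fsub : submodular f.
Hypothesis bpos : 0 < beta.

Local Notation st m := (pd_state e f beta m).

Lemma dimret (X Y : {set 'I_n}) i : X \subset Y -> marg f Y i <= marg f X i.
Proof.
move=> XY; have h := fsub (X :|: [set i]) Y.
have e1 : (X :|: [set i]) :|: Y = Y :|: [set i].
  by rewrite setUC setUA (setUidPl XY).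
rewrite e1 in h.
have h2 : f X <= f ((X :|: [set i]) :&: Y).
  by apply: fmono; rewrite subsetI subsetUl XY.
rewrite /marg; lra.
Qed.

Lemma sum_marg A (s : seq 'I_n) :
  f (A :|: [set x in s]) <= f A + \sum_(i <- s) marg f A i.
Proof.
elim: s => [|x s IH].
  have -> : A :|: [set x in [::]] = A by apply/setP=> x; rewrite !inE orbF.
  by rewrite big_nil addr0.
have -> : A :|: [set y in x :: s] = (A :|: [set y in s]) :|: [set x].
  by apply/setP=> y; rewrite !inE; case: (y == x); case: (y \in A); case: (y \in s).
have h := @dimret _ _ x (subsetUl A [set y in s]).
rewrite big_cons; move: h IH; rewrite /marg; lra.
Qed.

Lemma st_step_w m (j : 'I_n) : (j < m)%N -> (st m.+1).2 j = (st m).2 j.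
Proof.
move=> hj /=; case: insubP => [i _ Hi|_] //=; rewrite /pd_step.
case: ifP => //= _; case: (j =P i) => [ji|//].
by move: hj; rewrite ji Hi ltnn.
Qed.

Lemma st_step_S m : (st m).1 \subset (st m.+1).1.
Proof.
rewrite /=; case: insubP => [i _ Hi|_] //=; rewrite /pd_step.
by case: ifP => //= _; rewrite subsetUl.
Qed.

Lemma st_mono m m' : (m <= m')%N ->
  (st m).1 \subset (st m').1 /\ (forall j : 'I_n, (j < m)%N -> (st m').2 j = (st m).2 j).
Proof.
elim: m' => [|m' IH].
  by rewrite leqn0 => /eqP ->.
rewrite leq_eqVlt => /orP [/eqP ->//|]; rewrite ltnS => hm; have [h1 h2] := IH hm; split.
  exact: subset_trans h1 (st_step_S m').
move=> j hj; rewrite st_step_w ?h2 //.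
exact: leq_trans hj hm.
Qed.

Lemma st_S_lt m (j : 'I_n) : j \in (st m).1 -> (j < m)%N.
Proof.
elim: m => [|m IH]; first by rewrite /= inE.
rewrite /=; case: insubP => [i _ Hi|_] /=; last by move/IH/ltnW.
rewrite /pd_step; case: ifP => /= _; last by move/IH/ltnW.
by rewrite !inE => /orP [/IH/ltnW //| /eqP ->]; rewrite Hi.
Qed.

Lemma st_w_ge0 m (j : 'I_n) : 0 <= (st m).2 j.
Proof.
elim: m j => [|m IH] j; first by [].
rewrite /=; case: insubP => [i _ Hi|_] //=; rewrite /pd_step.
case: ifP => //= hg; case: (j == i) => //.
set s := \sum_(_ in _) _ in hg *.
have s0 : 0 <= s by apply: sumr_ge0 => x _.
have : 0 <= beta * s by apply: mulr_ge0 => //; apply: ltW.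
move: hg; rewrite mulrDl mul1r; lra.
Qed.

Lemma st_fail (i : 'I_n) : i \notin (st i.+1).1 ->
  marg f (st i).1 i <= (1 + beta) * \sum_(j in nbhd e i :&: (st i).1) (st i).2 j.
Proof.
rewrite /=; case: insubP => [u _ Hu|]; last by rewrite ltn_ord.
have -> : u = i by apply: val_inj.
rewrite /pd_step; case: ifP => /= hg.
  by rewrite !inE eqxx orbT.
by move=> _; rewrite leNgt hg.
Qed.
End Aux.

Theorem lemma2 (R : realFieldType) (n k : nat) (e : rel 'I_n)
  (f : {set 'I_n} -> R) (beta : R) :
  (1 <= k)%N ->
  simple_graph e ->
  inductively_k_independent e k ->
  (forall A, 0 <= f A) ->
  monotone_setfun f ->
  submodular f ->
  f set0 = 0 ->
  0 < beta ->
  let Send := S_end e f beta in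
  let mu := f Send in
  let y := fun i => (1 + beta) * pd_w e f beta i in
  let z := fun i => if i \in Send then 0 else marg f (S_before e f beta i) i in
  (forall L : {set 'I_n}, f L <= mu + \sum_(i in L) z i) /\
  (forall i : 'I_n, z i <= y i + \sum_(j in nbhd e i | (j < i)%N) y j) /\
  (forall i : 'I_n, 0 <= y i).
Proof.
move=> _ _ _ _ fmono fsub _ bpos Send mu y z.
have b1 : 0 <= 1 + beta by lra.
have y0 : forall i, 0 <= y i.
  by move=> i; apply: mulr_ge0 => //; rewrite /pd_w; exact: (@st_w_ge0 R n e f beta bpos n i).
split; last split; last exact: y0.
- move=> L.
  have h1 : f L <= f (Send :|: [set x in enum (L :\: Send)]).
    apply: fmono; rewrite set_enum; apply/subsetP => x xL.
    by rewrite !inE xL; case: (x \in Send).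
  have h2 := @sum_marg R n f fmono fsub Send (enum (L :\: Send)).
  rewrite big_enum /= in h2.
  have h3 : \sum_(i in L :\: Send) marg f Send i <= \sum_(i in L) z i.
    have -> : \sum_(i in L) z i = \sum_(i in L :\: Send) marg f (S_before e f beta i) i.
      rewrite (bigID (fun i => i \in Send)) /=.
      rewrite big1 ?add0r; last by move=> i /andP [_ Hi]; rewrite /z Hi.
      apply: eq_big => [i|i]; first by rewrite inE andbC.
      by move=> /andP [_ /negbTE]; rewrite /z => ->.
    apply: ler_sum => i _; apply: (@dimret R n f fmono fsub).
    by have [] := @st_mono R n e f beta _ _ (ltnW (ltn_ord i)).
  rewrite /mu; lra.
- move=> i; rewrite /z; case: ifP => iS.
    by apply: addr_ge0 => //; apply: sumr_ge0.
  have [hS _] := @st_mono R n e f beta _ _ (ltn_ord i).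
  have ni : i \notin (pd_state e f beta i.+1).1.
    by apply/negP => H; move: iS; rewrite /Send /S_end (subsetP hS _ H).
  have hf := @st_fail R n e f beta i ni.
  have [_ hw] := @st_mono R n e f beta _ _ (ltnW (ltn_ord i)).
  apply: (le_trans hf); rewrite -[X in X <= _]add0r; apply: lerD => //.
  rewrite mulr_sumr [X in X <= _]big_mkcond [X in _ <= X]big_mkcond /=.
  apply: ler_sum => j _; rewrite inE.
  case jS: (j \in (pd_state e f beta i).1); rewrite ?andbF ?andbT.
    have jl := @st_S_lt R n e f beta _ _ jS.
    by rewrite /y /pd_w hw // jl; case: (j \in nbhd e i).
  by case: ifP.
Qed.
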